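(* Let $\mathcal{A}^*$ be a graded-commutative differential graded algebra over a field $\mathbb{k}$ of characteristic zero, let $\mathcal{N}^*$ be a differential graded module over $\mathcal{A}^*$, and let $\xi_1,\xi_2\in\mathcal{A}^1$ be cocycles with $\xi_1-\xi_2=df$ for some $f\in\mathcal{A}^0$. Then the exact couples (and hence the spectral sequences) associated to $(\mathcal{N}^*,\xi_1)$ and to $(\mathcal{N}^*,\xi_2)$ by the construction described in the context are isomorphic. In other words, the deformation spectral sequence depends only on the cohomology class of $\xi$.
   Context: A differential graded module (DGM) $\mathcal{N}^*$ over $\mathcal{A}^*$ is a graded $\mathcal{A}^*$-module with a differential $d$ of degree $+1$ satisfying the Leibniz rule with respect to the pairing $\mathcal{A}^*\times\mathcal{N}^*\to\mathcal{N}^*$. For a cocycle $\xi\in\mathcal{A}^1$, let $\mathcal{N}^*[[t]]$ be the graded module of formal power series in $t$ with coefficients in $\mathcal{N}^*$ (degree-$k$ part: series with coefficients in $\mathcal{N}^k$), endowed with the differential $D_t x=dx+t\xi x$. The short exact sequence of DGMs $0\to\mathcal{N}^*[[t]]\xrightarrow{t}\mathcal{N}^*[[t]]\xrightarrow{\pi}\mathcal{N}^*\to 0$ (with $\pi$ setting $t=0$) induces a long exact sequence in cohomology, regarded as an exact couple $(D,E,i,j,k)$ with $D=H^*(\mathcal{N}^*[[t]],D_t)$, $E=H^*(\mathcal{N}^*,d)$, $i$ = multiplication by $t$, $j=\pi_*$, $k$ = the connecting homomorphism. Its spectral sequence is the one obtained by iterating Massey's derived couple construction ($E'=\mathrm{Ker}(jk)/\mathrm{Im}(jk)$,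 $D'=i(D)$, with induced maps). *)

(* Defs.v *)
(* Graded objects are modelled, as in Mathlib's GradedAlgebra,
   by an ambient k-vector space together with a family of homogeneous
   subspaces forming a direct-sum decomposition (nonnegative grading). *)
From HB Require Import structures.
From mathcomp Require Import all_boot all_order all_algebra.
From mathcomp Require Import boolp classical_sets functions.

Set Implicit Arguments.
Unset Strict Implicit.
Unset Printing Implicit Defensive.

Import GRing.Theory.
Local Open Scope ring_scope.

Section DeformationCouple.
Variable k : fieldType.

Definition sgn (n : nat) : k := (-1) ^+ n.

Definition is_subspace (V : lmodType k) (P : V -> Prop) : Prop :=
  [/\ P 0, (forall x y, P x -> P y -> P (x + y)) & (forall (c : k) x, P x -> P (c *: x))].

Definition graded_decomposition (V : lmodType k) (G : nat -> V -> Prop) : Prop :=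
  [/\ (forall n, is_subspace (G n)),
      (forall (m : nat) (v : nat -> V), (forall i, G i (v i)) ->
          \sum_(i < m) v i = 0 -> forall i, (i < m)%N -> v i = 0)
    & (forall x, exists (m : nat) (v : nat -> V),
          (forall i, G i (v i)) /\ x = \sum_(i < m) v i)].

Definition klinear (V W : lmodType k) (f : V -> W) : Prop :=
  forall (c : k) x y, f (c *: x + y) = c *: f x + f y.

Record is_cdga (A : algType k) (G : nat -> A -> Prop) (d : A -> A) : Prop := {
  cdga_graded : graded_decomposition G;
  cdga_one : G 0%N 1;
  cdga_mul : forall p q a b, G p a -> G q b -> G (p + q)%N (a * b);
  cdga_comm : forall p q a b, G p a -> G q b -> a * b = sgn (p * q) *: (b * a);
  cdga_dlin : klinear d;
  cdga_ddeg : forall p a, G p a -> G p.+1 (d a);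
  cdga_dd : forall a, d (d a) = 0;
  cdga_leibniz : forall p a b, G p a -> d (a * b) = d a * b + sgn p *: (a * d b)
}.

Record is_dgmod (A : algType k) (GA : nat -> A -> Prop) (dA : A -> A)
    (N : lmodType k) (GN : nat -> N -> Prop) (dN : N -> N) (act : A -> N -> N) : Prop := {
  dgm_graded : graded_decomposition GN;
  dgm_lin_l : forall x, klinear (fun a => act a x);
  dgm_lin_r : forall a, klinear (act a);
  dgm_one : forall x, act 1 x = x;
  dgm_assoc : forall a b x, act (a * b) x = act a (act b x);
  dgm_deg : forall p q a x, GA p a -> GN q x -> GN (p + q)%N (act a x);
  dgm_dlin : klinear dN;
  dgm_ddeg : forall q x, GN q x -> GN q.+1 (dN x);
  dgm_dd : forall x, dN (dN x) = 0;
  dgm_leibniz : forall p a x, GA p a ->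
      dN (act a x) = act (dA a) x + sgn p *: act a (dN x)
}.

(** ** Cohomology of a cochain complex (X, G, d), presented by representatives:
    H^n = {degree n cocycles} / {degree n coboundaries}. *)
Section Cohomology.
Variables (X : lmodType k) (G : nat -> X -> Prop) (d : X -> X).

Definition cocycle (n : nat) (x : X) : Prop := G n x /\ d x = 0.

Definition coboundary (n : nat) (x : X) : Prop :=
  match n with
  | 0%N => x = 0
  | m.+1 => exists y, G m y /\ x = d y
  end.

Definition cohomologous (n : nat) (x y : X) : Prop := coboundary n (x - y).
End Cohomology.

(** f (given on representatives, degreewise) induces a well-defined, degree
    preserving, k-linear map H^*(X) -> H^*(Y) *)
Definition cohom_map (X : lmodType k) (GX : nat -> X -> Prop) (dX : X -> X)
    (Y : lmodType k) (GY : nat -> Y -> Prop) (dY : Y -> Y) (f : nat -> X -> Y) : Prop :=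
  forall n,
  [/\ (forall x, cocycle GX dX n x -> cocycle GY dY n (f n x)),
      (forall x y, cocycle GX dX n x -> cocycle GX dX n y ->
          cohomologous GX dX n x y -> cohomologous GY dY n (f n x) (f n y))
    & (forall (c : k) x y, cocycle GX dX n x -> cocycle GX dX n y ->
          cohomologous GY dY n (f n (c *: x + y)) (c *: f n x + f n y))].

Definition cohom_iso (X : lmodType k) (GX : nat -> X -> Prop) (dX : X -> X)
    (Y : lmodType k) (GY : nat -> Y -> Prop) (dY : Y -> Y) (f : nat -> X -> Y) : Prop :=
  cohom_map GX dX GY dY f /\
  forall n,
  (forall x y, cocycle GX dX n x -> cocycle GX dX n y ->
      cohomologous GY dY n (f n x) (f n y) -> cohomologous GX dX n x y) /\
  (forall w, cocycle GY dY n w -> exists x, cocycle GX dX n x /\ cohomologous GY dY n (f n x) w).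

(** ** Formal power series N[[t]] = nat -> N (coefficient of t^m at m) *)
Section Series.
Variables (A : algType k) (N : lmodType k) (GN : nat -> N -> Prop)
  (dN : N -> N) (act : A -> N -> N).

(** degree-n part of N[[t]]: series with all coefficients in N^n *)
Definition ser_deg (n : nat) (s : nat -> N) : Prop := forall m, GN n (s m).

Definition tmul (s : nat -> N) : nat -> N :=
  fun m => if m is m'.+1 then s m' else 0.

Definition Dt (xi : A) (s : nat -> N) : nat -> N :=
  fun m => dN (s m) + tmul (fun j => act xi (s j)) m.

Definition piser (s : nat -> N) : N := s 0%N.

(** connecting homomorphism k : H^n(N) -> H^{n+1}(N[[t]]), as a relation on
    representatives: z (a cocycle) lifts to x with pi x = z, and D_t x = t w. *)
Definition connecting (xi : A) (n : nat) (z : N) (w : nat -> N) : Prop :=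
  exists x, [/\ ser_deg n x, piser x = z, ser_deg n.+1 w & Dt xi x = tmul w].

(** The exact couple (D, E, i, j, k) of (N, xi1) is isomorphic to that of
    (N, xi2): there are (degree preserving) isomorphisms
    alpha : D1 = H(N[[t]], D_t^{xi1}) -> D2 = H(N[[t]], D_t^{xi2}) and
    beta : E1 = H(N, d) -> E2 = H(N, d) with
    alpha o i1 = i2 o alpha, beta o j1 = j2 o alpha, alpha o k1 = k2 o beta. *)
Definition exact_couples_isomorphic (xi1 xi2 : A) : Prop :=
  exists (alpha : nat -> (nat -> N) -> (nat -> N)) (beta : nat -> N -> N),
  [/\ cohom_iso ser_deg (Dt xi1) ser_deg (Dt xi2) alpha,
      cohom_iso GN dN GN dN beta,
      (forall n s, cocycle ser_deg (Dt xi1) n s ->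
          cohomologous ser_deg (Dt xi2) n (alpha n (tmul s)) (tmul (alpha n s))),
      (forall n s, cocycle ser_deg (Dt xi1) n s ->
          cohomologous GN dN n (beta n (piser s)) (piser (alpha n s)))
    & (forall n z w, cocycle GN dN n z -> connecting xi1 n z w ->
          exists w', connecting xi2 n (beta n z) w' /\
                     cohomologous ser_deg (Dt xi2) n.+1 (alpha n.+1 w) w')].
End Series.

End DeformationCouple.

(* Main.v *)
Require Import Defs.
From HB Require Import structures.
From mathcomp Require Import all_boot all_order all_algebra.
From mathcomp Require Import boolp classical_sets functions.
From mathcomp Require Import ring.

Import GRing.Theory.
Local Open Scope ring_scope.

Set Implicit Arguments.
Unset Strict Implicit.
Unset Printing Implicit Defensive.

Section KL.
Variable k : fieldType.
Lemma kl0 (V W : lmodType k) (g : V -> W) : klinear g -> g 0 = 0.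
Proof.
move=> H; have := H 1 0 0; rewrite scaler0 addr0 scale1r.
by move/(congr1 (fun z => z - g 0)); rewrite subrr addrK.
Qed.
Lemma klD (V W : lmodType k) (g : V -> W) x y : klinear g -> g (x + y) = g x + g y.
Proof. by move=> H; have := H 1 x y; rewrite !scale1r. Qed.
Lemma klZ (V W : lmodType k) (g : V -> W) c x : klinear g -> g (c *: x) = c *: g x.
Proof. by move=> H; have := H c x 0; rewrite !addr0 (kl0 H) addr0. Qed.
Lemma klN (V W : lmodType k) (g : V -> W) x : klinear g -> g (- x) = - g x.
Proof. by move=> H; rewrite -scaleN1r klZ // scaleN1r. Qed.
Lemma klB (V W : lmodType k) (g : V -> W) x y : klinear g -> g (x - y) = g x - g y.
Proof. by move=> H; rewrite klD // klN. Qed.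
Lemma klsum (V W : lmodType k) (g : V -> W) m (F : 'I_m -> V) : klinear g ->
  g (\sum_(i < m) F i) = \sum_(i < m) g (F i).
Proof. by move=> H; rewrite (big_morph g (fun x y => @klD _ _ g x y H) (kl0 H)). Qed.
Lemma sub_sum (V : lmodType k) (P : V -> Prop) m (F : 'I_m -> V) :
  is_subspace P -> (forall i, P (F i)) -> P (\sum_(i < m) F i).
Proof. by case=> P0 PD _ HF; elim/big_ind: _ => //; auto. Qed.
End KL.

Section Gen.
Variable k : fieldType.
Variables (X Y : lmodType k) (GX : nat -> X -> Prop) (dX : X -> X)
  (GY : nat -> Y -> Prop) (dY : Y -> Y).

Lemma cob0 n : (forall m, GY m 0) -> dY 0 = 0 -> coboundary GY dY n 0.
Proof. by move=> H0 Hd; case: n => [|n] //=; exists 0; split. Qed.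

Lemma transfer (g : X -> Y) n x : klinear g -> (forall n x, GX n x -> GY n (g x)) ->
  (forall x, dY (g x) = g (dX x)) ->
  coboundary GX dX n x -> coboundary GY dY n (g x).
Proof.
move=> Hl Hdeg Hc; case: n => [|n] /=; first by move=> ->; rewrite (kl0 Hl).
by case=> y [Hy ->]; exists (g y); split; [apply: Hdeg | rewrite Hc].
Qed.

Lemma cocycle_transfer (g : X -> Y) n x : klinear g -> (forall n x, GX n x -> GY n (g x)) ->
  (forall x, dY (g x) = g (dX x)) -> cocycle GX dX n x -> cocycle GY dY n (g x).
Proof.
by move=> Hl Hdeg Hc [Hx Hd]; split; [apply: Hdeg | rewrite Hc Hd (kl0 Hl)].
Qed.

End Gen.

Lemma iso_of_inv (k : fieldType) (X Y : lmodType k) (GX : nat -> X -> Prop) (dX : X -> X)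
  (GY : nat -> Y -> Prop) (dY : Y -> Y) (g : X -> Y) (h : Y -> X) :
  klinear g -> klinear h ->
  (forall n x, GX n x -> GY n (g x)) -> (forall n y, GY n y -> GX n (h y)) ->
  (forall x, dY (g x) = g (dX x)) -> (forall y, dX (h y) = h (dY y)) ->
  (forall x, h (g x) = x) -> (forall y, g (h y) = y) ->
  (forall m, GY m 0) -> dY 0 = 0 ->
  cohom_iso GX dX GY dY (fun _ => g).
Proof.
move=> Lg Lh Dg Dh Cg Ch hg gh G0 d0; split.
  move=> n; split.
  - by move=> x; apply: cocycle_transfer.
  - move=> x y _ _ Hxy; rewrite /cohomologous -(klB _ _ Lg).
    exact: (transfer Lg Dg Cg Hxy).
  - by move=> c x y _ _; rewrite /cohomologous Lg subrr; apply: cob0.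
move=> n; split.
  move=> x y _ _ Hxy; rewrite /cohomologous -(hg x) -(hg y) -(klB _ _ Lh).
  apply: (transfer Lh Dh Ch).
  exact: Hxy.
move=> w Hw; exists (h w); split.
  by apply: (cocycle_transfer Lh Dh Ch).
by rewrite /cohomologous gh subrr; apply: cob0.
Qed.

Section Main.
Variable k : fieldType.
Hypothesis Hchar : [pchar k] =i pred0.
Variables (A : algType k) (GA : nat -> A -> Prop) (dA : A -> A).
Hypothesis HA : is_cdga GA dA.
Variables (N : lmodType k) (GN : nat -> N -> Prop) (dN : N -> N) (act : A -> N -> N).
Hypothesis HN : is_dgmod GA dA GN dN act.

Lemma act_addl a b x : act (a + b) x = act a x + act b x.
Proof. exact: (@klD _ _ _ (fun a => act a x) a b (dgm_lin_l HN x)). Qed.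
Lemma act_addr a x y : act a (x + y) = act a x + act a y.
Proof. exact: (@klD _ _ _ (act a) x y (dgm_lin_r HN a)). Qed.
Lemma act0l x : act 0 x = 0.
Proof. exact: (@kl0 _ _ _ (fun a => act a x) (dgm_lin_l HN x)). Qed.
Lemma act0r a : act a 0 = 0.
Proof. exact: (@kl0 _ _ _ (act a) (dgm_lin_r HN a)). Qed.
Lemma act_scalel c a x : act (c *: a) x = c *: act a x.
Proof. exact: (@klZ _ _ _ (fun a => act a x) c a (dgm_lin_l HN x)). Qed.
Lemma act_scaler c a x : act a (c *: x) = c *: act a x.
Proof. exact: (@klZ _ _ _ (act a) c x (dgm_lin_r HN a)). Qed.
Lemma act_suml m (F : 'I_m -> A) x : act (\sum_(i < m) F i) x = \sum_(i < m) act (F i) x.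
Proof. exact: (@klsum _ _ _ (fun a => act a x) m F (dgm_lin_l HN x)). Qed.
Lemma act_sumr m a (F : 'I_m -> N) : act a (\sum_(i < m) F i) = \sum_(i < m) act a (F i).
Proof. exact: (@klsum _ _ _ (act a) m F (dgm_lin_r HN a)). Qed.

Definition ex (g : A) (j : nat) : A := (j`!%:R : k)^-1 *: g ^+ j.
Definition conv (a : nat -> A) (s : nat -> N) : nat -> N :=
  fun m => \sum_(i < m.+1) act (a i) (s (m - i)%N).
Definition cauchy (a b : nat -> A) (p : nat) : A := \sum_(i < p.+1) a i * b (p - i)%N.
Definition shift (s : nat -> N) : nat -> N := fun m => s m.+1.

Lemma conv0 a s : conv a s 0 = act (a 0) (s 0).
Proof. by rewrite /conv big_ord1. Qed.

Lemma conv_S a s m : conv a s m.+1 = conv a (shift s) m + act (a m.+1) (s 0).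
Proof.
rewrite /conv big_ord_recr /=; rewrite subnn; congr (_ + _); apply: eq_bigr => i _ /=.
by rewrite /shift subSn // -ltnS.
Qed.

Lemma cauchy_S a b m :
  cauchy a b m.+1 = \sum_(i < m.+1) a i * b (m - i)%N.+1 + a m.+1 * b 0.
Proof.
rewrite /cauchy big_ord_recr /= subnn; congr (_ + _); apply: eq_bigr => i _ /=.
by rewrite subSn // -ltnS.
Qed.

Lemma conv_add a s t m : conv a (s + t) m = conv a s m + conv a t m.
Proof. by rewrite /conv -big_split; apply: eq_bigr => i _; rewrite act_addr. Qed.

Lemma conv_assoc a b m s : conv a (conv b s) m = conv (cauchy a b) s m.
Proof.
elim: m s => [|m IH] s.
  by rewrite !conv0 /cauchy big_ord1 (dgm_assoc HN).
rewrite conv_S.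
have -> : shift (conv b s) = conv b (shift s) + (fun j => act (b j.+1) (s 0)).
  by apply: funext => j; rewrite /shift conv_S.
rewrite conv_add IH conv_S cauchy_S conv0 act_addl act_suml (dgm_assoc HN) // -addrA.
congr (_ + _); congr (_ + _).
by apply: eq_bigr => i _; rewrite (dgm_assoc HN).
Qed.


Lemma sgn0 : sgn k 0 = 1.
Proof. by rewrite /sgn expr0. Qed.

Lemma fact_nz j : (j`!%:R : k) != 0.
Proof. by move/pcharf0P: Hchar => ->; rewrite -lt0n fact_gt0. Qed.

Lemma GA0_mul a b : GA 0 a -> GA 0 b -> GA 0 (a * b).
Proof. by move=> Ha Hb; have := cdga_mul HA Ha Hb. Qed.
Lemma GA0_exp a n : GA 0 a -> GA 0 (a ^+ n).
Proof.
move=> Ha; elim: n => [|n IH]; first by rewrite expr0; exact: (cdga_one HA).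
by rewrite exprS; apply: GA0_mul.
Qed.
Lemma GA_scale n c a : GA n a -> GA n (c *: a).
Proof.
move=> Ha; case: (cdga_graded HA) => Hs _ _; case: (Hs n) => _ _ HZ; exact: HZ.
Qed.
Lemma GA_add n a b : GA n a -> GA n b -> GA n (a + b).
Proof.
move=> Ha Hb; case: (cdga_graded HA) => Hs _ _; case: (Hs n) => _ HD _; exact: HD.
Qed.
Lemma GA0_ex g j : GA 0 g -> GA 0 (ex g j).
Proof. by move=> Hg; apply: GA_scale; apply: GA0_exp. Qed.

Lemma comm01 a x : GA 0 a -> GA 1 x -> a * x = x * a.
Proof. by move=> Ha Hx; rewrite (cdga_comm HA Ha Hx) mul0n sgn0 scale1r. Qed.

Lemma dA_lin : klinear dA. Proof. exact: (cdga_dlin HA). Qed.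

Lemma dA1 : dA 1 = 0.
Proof.
have := cdga_leibniz HA 1 (cdga_one HA); rewrite !mul1r mulr1 sgn0 scale1r.
by move/(congr1 (fun z => z - dA 1)); rewrite subrr addrK => /esym.
Qed.

Lemma dA_exp f n : GA 0 f -> dA (f ^+ n.+1) = n.+1%:R *: (dA f * f ^+ n).
Proof.
move=> Hf; elim: n => [|n IH]; first by rewrite expr1 expr0 mulr1 scale1r.
rewrite exprS (cdga_leibniz HA _ Hf) sgn0 scale1r IH -scalerAr mulrA.
have -> : f * dA f = dA f * f by apply: comm01 => //; exact: (cdga_ddeg HA Hf).
by rewrite -mulrA -exprS -[n.+2%:R]natr1 scalerDl scale1r addrC.
Qed.

Lemma ex0 g : ex g 0 = 1.
Proof. by rewrite /ex expr0 fact0 invr1 scale1r. Qed.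

Lemma dA_ex0 g : dA (ex g 0) = 0.
Proof. by rewrite ex0 dA1. Qed.

Lemma dA_exS f j : GA 0 f -> dA (ex f j.+1) = dA f * ex f j.
Proof.
move=> Hf; rewrite /ex (klZ _ _ dA_lin) dA_exp // scalerA -scalerAr.
congr (_ *: _); rewrite factS natrM.
have h1 := fact_nz j.
have h2 : (j.+1%:R : k) != 0 by move/pcharf0P: Hchar => ->.
by field; rewrite h1 nat1r h2.
Qed.

Lemma conv_tmul a s m : conv a (tmul s) m = tmul (conv a s) m.
Proof.
case: m => [|m]; first by rewrite conv0 /= act0r.
rewrite conv_S /= act0r addr0; congr conv; exact: funext.
Qed.

Lemma conv_actc a c s m : (forall i, a i * c = c * a i) ->
  conv a (fun j => act c (s j)) m = act c (conv a s m).
Proof.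
move=> H; rewrite /conv act_sumr; apply: eq_bigr => i _.
by rewrite -!(dgm_assoc HN) H.
Qed.

Lemma conv_mull a c s m : conv (fun j => c * a j) s m = act c (conv a s m).
Proof.
by rewrite /conv act_sumr; apply: eq_bigr => i _; rewrite (dgm_assoc HN).
Qed.

Lemma conv_tmulA b s m :
  conv (fun j => if j is j'.+1 then b j' else 0) s m = tmul (conv b s) m.
Proof.
case: m => [|m]; first by rewrite conv0 act0l.
rewrite /conv big_ord_recl /= act0l add0r; apply: eq_bigr => i _.
by rewrite /bump /= add1n subSS.
Qed.

Lemma dN_lin : klinear dN. Proof. exact: (dgm_dlin HN). Qed.

Lemma Dt_conv xi1 xi2 f : GA 0 f -> GA 1 xi1 -> xi1 - xi2 = dA f ->
  forall s, Dt dN act xi2 (conv (ex f) s) = conv (ex f) (Dt dN act xi1 s).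
Proof.
move=> Hf Hxi1 Hd s; apply: funext => m.
have E1 : dN (conv (ex f) s m) =
    conv (fun j => dA (ex f j)) s m + conv (ex f) (fun j => dN (s j)) m.
  rewrite /conv (klsum _ dN_lin) -big_split; apply: eq_bigr => i _.
  by rewrite (dgm_leibniz HN _ (GA0_ex i Hf)) sgn0 scale1r.
rewrite /Dt E1.
have -> : (fun j => dA (ex f j)) = (fun j => if j is j'.+1 then dA f * ex f j' else 0).
  by apply: funext => -[|j]; rewrite ?dA_ex0 ?dA_exS.
rewrite conv_tmulA.
have -> : (fun j => dN (s j) + tmul (fun j0 => act xi1 (s j0)) j) =
   (fun j => dN (s j)) + tmul (fun j0 => act xi1 (s j0)) by [].
rewrite conv_add conv_tmul.
have -> : conv (ex f) (fun j0 => act xi1 (s j0)) = fun j => act xi1 (conv (ex f) s j).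
  apply: funext => j; apply: conv_actc => i; apply: comm01 => //; exact: GA0_ex.
clear E1; case: m => [|m] /=; first by rewrite !addr0 add0r.
have -> : xi1 = dA f + xi2 by rewrite -Hd subrK.
by rewrite conv_mull act_addl addrA [_ + conv _ _ _]addrC.
Qed.

Lemma ex_cauchy g h p : GRing.comm g h -> cauchy (ex g) (ex h) p = ex (g + h) p.
Proof.
move=> Hc; rewrite /cauchy /ex addrC (exprDn_comm _ (esym Hc)) scaler_sumr.
apply: eq_bigr => -[i Hi] _ /=.
rewrite -scalerAl -scalerAr scalerA -scaler_nat scalerA.
have -> : g ^+ i * h ^+ (p - i) = h ^+ (p - i) * g ^+ i.
  by apply: commrX; apply: commr_sym; apply: commrX.
congr (_ *: _).
have Hip : (i <= p)%N by rewrite -ltnS.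
rewrite -(bin_fact Hip) !natrM.
have h1 := fact_nz i; have h2 := fact_nz (p - i).
have h3 : ('C(p, i)%:R : k) != 0 by move/pcharf0P: Hchar => ->; rewrite -lt0n bin_gt0.
by field; rewrite h1 h2 h3.
Qed.

Lemma ex_zero p : ex 0 p = if p is _.+1 then 0 else 1.
Proof. by case: p => [|p]; rewrite ?ex0 // /ex expr0n scaler0. Qed.

Lemma conv_inv g h s : GRing.comm g h -> g + h = 0 -> conv (ex g) (conv (ex h) s) = s.
Proof.
move=> Hc Hs; apply: funext => m; rewrite conv_assoc.
have -> : cauchy (ex g) (ex h) = ex 0 by apply: funext => p; rewrite ex_cauchy // Hs.
rewrite /conv big_ord_recl ex_zero (dgm_one HN) big1 ?addr0 ?subn0 // => i _.
by rewrite ex_zero act0l.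
Qed.

Lemma conv_lin a : klinear (conv a).
Proof.
move=> c s t; apply: funext => m; rewrite conv_add.
have -> : (c *: conv a s + conv a t) m = c *: conv a s m + conv a t m by [].
congr (_ + _).
by rewrite /conv scaler_sumr; apply: eq_bigr => i _; rewrite -act_scaler.
Qed.

Lemma GN_sub n : is_subspace (GN n).
Proof. by case: (dgm_graded HN) => H _ _; exact: H. Qed.

Lemma GN0 n : GN n 0.
Proof. by case: (GN_sub n) => H _ _; exact: H. Qed.

Lemma conv_deg f n s : GA 0 f -> ser_deg GN n s -> ser_deg GN n (conv (ex f) s).
Proof.
move=> Hf Hs m; apply: sub_sum; first exact: GN_sub.
by move=> i; have := dgm_deg HN (GA0_ex i Hf) (Hs (m - i)%N).
Qed.

Lemma Dt0 xi : Dt dN act xi 0 = 0.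
Proof.
apply: funext => m; rewrite /Dt.
have -> : (0 : nat -> N) m = 0 by [].
rewrite (kl0 dN_lin) add0r; case: m => [|m] //=; exact: act0r.
Qed.

Lemma ser0 m : ser_deg GN m 0.
Proof. by move=> j; exact: GN0. Qed.

Lemma main_sec (xi1 xi2 f : A)
  (Hxi1 : GA 1%N xi1) (Hxi2 : GA 1%N xi2)
  (Hf : GA 0%N f) (Hdf : xi1 - xi2 = dA f) :
  exact_couples_isomorphic GN dN act xi1 xi2.
Proof.
have Hfn : GA 0 (- f) by rewrite -scaleN1r; apply: GA_scale.
have Hdf' : xi2 - xi1 = dA (- f) by rewrite (klN _ dA_lin) -Hdf opprB.
have C1 := Dt_conv Hf Hxi1 Hdf.
have C2 := Dt_conv Hfn Hxi2 Hdf'.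
have I1 : forall s, conv (ex (- f)) (conv (ex f) s) = s.
  by move=> s; apply: conv_inv; [apply: commr_sym; apply: commrN; apply: commr_refl | rewrite addNr].
have I2 : forall s, conv (ex f) (conv (ex (- f)) s) = s.
  by move=> s; apply: conv_inv; [apply: commrN; apply: commr_refl | rewrite subrr].
exists (fun _ => conv (ex f)), (fun _ x => x); split.
- apply: (iso_of_inv (h := conv (ex (- f)))).
  + exact: conv_lin.
  + exact: conv_lin.
  + by move=> n x; apply: conv_deg.
  + by move=> n x; apply: conv_deg.
  + by move=> x; rewrite C1.
  + by move=> x; rewrite C2.
  + exact: I1.
  + exact: I2.
  + exact: ser0.
  + exact: Dt0.
- by apply: (iso_of_inv (h := id)) => //; try exact: GN0; try exact: (kl0 dN_lin).
- move=> n s _; rewrite /cohomologous.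
  have -> : conv (ex f) (tmul s) = tmul (conv (ex f) s) by apply: funext => m; rewrite conv_tmul.
  by rewrite subrr; apply: cob0; [exact: ser0 | exact: Dt0].
- move=> n s _; rewrite /cohomologous /piser conv0 ex0 (dgm_one HN) subrr.
  by apply: cob0; [exact: GN0 | exact: (kl0 dN_lin)].
move=> n z w _ [x [Hx Hpx Hw HD]].
exists (conv (ex f) w); split; last first.
  by rewrite /cohomologous subrr; apply: cob0; [exact: ser0 | exact: Dt0].
exists (conv (ex f) x); split.
- exact: conv_deg.
- by rewrite /piser conv0 ex0 (dgm_one HN).
- exact: conv_deg.
- by rewrite C1 HD; apply: funext => m; rewrite conv_tmul.
Qed.
End Main.

Theorem proposition3p1 (k : fieldType) (Hchar : [pchar k] =i pred0)
  (A : algType k) (GA : nat -> A -> Prop) (dA : A -> A) (HA : is_cdga GA dA)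
  (N : lmodType k) (GN : nat -> N -> Prop) (dN : N -> N) (act : A -> N -> N)
  (HN : is_dgmod GA dA GN dN act)
  (xi1 xi2 f : A)
  (Hxi1 : GA 1%N xi1) (Hdxi1 : dA xi1 = 0)
  (Hxi2 : GA 1%N xi2) (Hdxi2 : dA xi2 = 0)
  (Hf : GA 0%N f) (Hdf : xi1 - xi2 = dA f) :
  exact_couples_isomorphic GN dN act xi1 xi2.
Proof. exact: (main_sec Hchar HA HN Hxi1 Hxi2 Hf Hdf). Qed.
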